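(* Let $X$ be a finite alphabet and let $M_1, M_2$ be monoids with monoid choices of generators $\sigma_1 : X^* \to M_1$ and $\sigma_2 : X^* \to M_2$. If $L_{\sigma_1}(M_1) = L_{\sigma_2}(M_2)$, then there is a monoid isomorphism $\rho : M_1 \to M_2$ such that $\sigma_1\rho = \sigma_2$ (i.e. $(w\sigma_1)\rho = w\sigma_2$ for all $w \in X^*$). The corresponding statement holds for semigroups $S_1, S_2$ with semigroup choices of generators $\sigma_1 : X^+ \to S_1$, $\sigma_2 : X^+ \to S_2$ (with a semigroup isomorphism $\rho$).
   Context: Maps are written on the right and composed left to right. $X^*$, $X^+$: free monoid and free semigroup on $X$. Let $\overline{X} = \{\overline{x} : x \in X\}$ be new symbols, $\hat{X} = X \cup \overline{X}$. For a monoid $M$ and surjective monoid morphism $\sigma : X^* \to M$, the loop automaton has vertex set $M$, for each $a \in M$, $x \in X$ an edge $a \to a(x\sigma)$ labelled $x$ and an edge $a(x\sigma) \to a$ labelled $\overline{x}$; the loop problem $L_\sigma(M) \subseteq \hat{X}^*$ is the set of labels of paths from the identity to the identity. For a semigroup $S$ and surjective morphism $\sigma : X^+ \to S$, $L_\sigma(S)$ is the loop problem of $S^1$ ($S$ with a new identity adjoined, even if one exists) with respect to the unique extension $\sigma^1 : X^* \to S^1$. *)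

(* Defs.v *)
From mathcomp Require Import all_boot.
Set Warnings "-notation-overridden".

Set Implicit Arguments. Unset Strict Implicit. Unset Printing Implicit Defensive.

Record monoid := Monoid {
  mcar :> Type;
  mmul : mcar -> mcar -> mcar;
  mone : mcar;
  mmulA : associative mmul;
  mmul1m : left_id mone mmul;
  mmulm1 : right_id mone mmul }.

Record semigroup := Semigroup {
  scar :> Type;
  smul : scar -> scar -> scar;
  smulA : associative smul }.

(* Words over X: X^* = seq X; X^+ = nonempty elements of seq X.
   hat X = X + X, with inl x = x and inr x = \overline{x}. *)

Definition monoid_choice (X : Type) (M : monoid) (sigma : seq X -> M) : Prop :=
  [/\ sigma [::] = @mone M,
      (forall u v, sigma (u ++ v) = @mmul M (sigma u) (sigma v))
    & (forall a : M, exists w, sigma w = a)].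

(* sigma : X^+ -> S is a surjective semigroup morphism
   (only its values on nonempty words matter) *)
Definition semigroup_choice (X : Type) (S : semigroup) (sigma : seq X -> S) : Prop :=
  (forall u v, u <> [::] -> v <> [::] -> sigma (u ++ v) = @smul S (sigma u) (sigma v))
  /\ (forall a : S, exists w, w <> [::] /\ sigma w = a).

(* Paths in the loop automaton: lpath a w b means there is a path from a to b
   labelled w. Edge a --x--> a(x sigma), edge a(x sigma) --xbar--> a. *)
Inductive lpath (X : Type) (M : monoid) (sigma : seq X -> M) :
    M -> seq (X + X) -> M -> Prop :=
| lpath_nil a : lpath sigma a [::] a
| lpath_fwd a x w b :
    lpath sigma (@mmul M a (sigma [:: x])) w b -> lpath sigma a (inl x :: w) b
| lpath_bwd a c x w b :
    @mmul M c (sigma [:: x]) = a -> lpath sigma c w b -> lpath sigma a (inr x :: w) b.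

Definition loop_problem (X : Type) (M : monoid) (sigma : seq X -> M)
  (w : seq (X + X)) : Prop := lpath sigma (@mone M) w (@mone M).

Definition adj1_mul (S : semigroup) (a b : option S) : option S :=
  match a, b with
  | None, _ => b
  | _, None => a
  | Some a, Some b => Some (@smul S a b)
  end.

Lemma adj1_mulA (S : semigroup) : associative (@adj1_mul S).
Proof. by case=> [a|] [b|] [c|] //=; rewrite smulA. Qed.
Lemma adj1_mul1m (S : semigroup) : left_id None (@adj1_mul S).
Proof. by case. Qed.
Lemma adj1_mulm1 (S : semigroup) : right_id None (@adj1_mul S).
Proof. by case. Qed.

Definition adjoin1 (S : semigroup) : monoid :=
  @Monoid (option S) (@adj1_mul S) None (@adj1_mulA S) (@adj1_mul1m S) (@adj1_mulm1 S).

Definition sigma1 (X : Type) (S : semigroup) (sigma : seq X -> S) : seq X -> adjoin1 S :=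
  fun w => match w with [::] => None | _ => Some (sigma w) end.

Definition sg_loop_problem (X : Type) (S : semigroup) (sigma : seq X -> S)
  (w : seq (X + X)) : Prop := loop_problem (sigma1 sigma) w.

(* Main.v *)
Require Import Defs.
From mathcomp Require Import all_boot.
From Stdlib Require Import Setoid ClassicalEpsilon.

Section K.
Variables (X : Type) (M : monoid) (s : seq X -> M).
Hypothesis hs : monoid_choice s.

Lemma fwdP u : forall a w b, lpath s a (map inl u ++ w) b <-> lpath s (mmul a (s u)) w b.
Proof.
case: hs => h0 hm _.
elim: u => [|x u IH] a w b /=.
  by rewrite h0 mmulm1.
have -> : s (x :: u) = mmul (s [:: x]) (s u) by rewrite -hm.
rewrite mmulA -IH; split => [H|H]; last by constructor.
by inversion H.
Qed.

Lemma bwdP v : forall a b, lpath s a (map inr (rev v)) b <-> a = mmul b (s v).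
Proof.
case: hs => h0 hm _.
elim/last_ind: v => [|v x IH] a b /=.
  rewrite h0 mmulm1; split => [H|->]; last by constructor.
  by inversion H.
rewrite rev_rcons /= -cats1 hm mmulA; split => [H|->].
  inversion H; subst; match goal with HH : lpath _ _ _ _ |- _ => by move/IH: HH => -> end.
by apply: (lpath_bwd (c := mmul b (s v))) => //; apply/IH.
Qed.

Lemma loopP u v : loop_problem s (map inl u ++ map inr (rev v)) <-> s u = s v.
Proof.
rewrite /loop_problem fwdP bwdP mmul1m mmul1m; by [].
Qed.
End K.

Lemma sigma1_choice (X : Type) (S : semigroup) (s : seq X -> S) :
  semigroup_choice s -> monoid_choice (sigma1 s).
Proof.
case=> hm hsurj; split => //.
- case=> [|x u] [|y v] //=; first by rewrite cats0.
  by rewrite -hm.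
- case=> [a|]; last by exists [::].
  have [w [wn <-]] := hsurj a.
  by exists w; case: w wn.
Qed.

Theorem corollary4p3 (X : finType) :
  (forall (M1 M2 : monoid) (s1 : seq X -> M1) (s2 : seq X -> M2),
     monoid_choice s1 -> monoid_choice s2 ->
     (forall w, loop_problem s1 w <-> loop_problem s2 w) ->
     exists rho : M1 -> M2,
       [/\ bijective rho, rho (@mone M1) = @mone M2,
           (forall a b, rho (@mmul M1 a b) = @mmul M2 (rho a) (rho b))
         & (forall w, rho (s1 w) = s2 w)])
  /\
  (forall (S1 S2 : semigroup) (s1 : seq X -> S1) (s2 : seq X -> S2),
     semigroup_choice s1 -> semigroup_choice s2 ->
     (forall w, sg_loop_problem s1 w <-> sg_loop_problem s2 w) ->
     exists rho : S1 -> S2,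
       [/\ bijective rho,
           (forall a b, rho (@smul S1 a b) = @smul S2 (rho a) (rho b))
         & (forall w, w <> [::] -> rho (s1 w) = s2 w)]).
Proof.
split.
- move=> M1 M2 s1 s2 h1 h2 hL.
  have E u v : s1 u = s1 v <-> s2 u = s2 v.
    by rewrite -(@loopP _ _ _ h1) -(@loopP _ _ _ h2).
  have su1 : forall a, exists w, s1 w = a by case: h1.
  have su2 : forall a, exists w, s2 w = a by case: h2.
  pose rho a := s2 (proj1_sig (constructive_indefinite_description _ (su1 a))).
  pose rho' b := s1 (proj1_sig (constructive_indefinite_description _ (su2 b))).
  have rhoE w : rho (s1 w) = s2 w by apply/E; rewrite (proj2_sig (constructive_indefinite_description _ (su1 (s1 w)))).
  have rho'E w : rho' (s2 w) = s1 w by apply/E; rewrite (proj2_sig (constructive_indefinite_description _ (su2 (s2 w)))).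
  case: (h1) => h10 h1m _; case: (h2) => h20 h2m _.
  exists rho; split => //.
  + exists rho' => a.
      by have [w <-] := su1 a; rewrite rhoE rho'E.
    by have [w <-] := su2 a; rewrite rho'E rhoE.
  + by rewrite -h10 rhoE h20.
  + move=> a b; have [u <-] := su1 a; have [v <-] := su1 b.
    by rewrite -h1m !rhoE h2m.
- move=> S1 S2 s1 s2 h1 h2 hL.
  have g1 := @sigma1_choice _ _ _ h1; have g2 := @sigma1_choice _ _ _ h2.
  have E u v : u <> [::] -> v <> [::] -> s1 u = s1 v <-> s2 u = s2 v.
    move=> un vn.
    have A := @loopP _ _ _ g1 u v; have B := @loopP _ _ _ g2 u v.
    have C := hL (map inl u ++ map inr (rev v)); rewrite /sg_loop_problem in C.
    have D : sigma1 s1 u = sigma1 s1 v <-> sigma1 s2 u = sigma1 s2 v by tauto.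
    clear A B C; move: D; case: u un; case: v vn => //= y v _ x u _ D.
    split => [H1|H1]; [have [H2] := (proj1 D (f_equal Some H1)) | have [H2] := (proj2 D (f_equal Some H1))]; by [].
  have su1 := h1.2; have su2 := h2.2.
  pose rho a := s2 (proj1_sig (constructive_indefinite_description _ (su1 a))).
  pose rho' b := s1 (proj1_sig (constructive_indefinite_description _ (su2 b))).
  have rhoE w : w <> [::] -> rho (s1 w) = s2 w.
    move=> wn; have [n e] := proj2_sig (constructive_indefinite_description _ (su1 (s1 w))); by apply/E.
  have rho'E w : w <> [::] -> rho' (s2 w) = s1 w.
    move=> wn; have [n e] := proj2_sig (constructive_indefinite_description _ (su2 (s2 w))); by apply/E.
  case: (h1) => h1m _; case: (h2) => h2m _.
  exists rho; split => //.
  + exists rho' => a.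
      by have [w [wn <-]] := su1 a; rewrite rhoE // rho'E.
    by have [w [wn <-]] := su2 a; rewrite rho'E // rhoE.
  + move=> a b; have [u [un <-]] := su1 a; have [v [vn <-]] := su1 b.
    rewrite -h1m // !rhoE ?h2m //.
    by case: u un.
Qed.
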